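(* Let ${\overline V}$ be a smooth vector field on a spacetime domain $\Omega\subset\mathbb R^{1+3}$ with $\Box{\overline V}=0$ in $\Omega$. Then for every integer $k\geq0$, \[ \Box D_{\overline V}^k {\overline V}= G_k\qquad\text{in }\Omega, \] where $G_k$ is a linear combination of terms of the form \[ (\nabla D_{\overline V}^{k_1}{\overline V})\cdots(\nabla D_{\overline V}^{k_p}{\overline V})(\nabla^{(2)} D_{\overline V}^{k_{p+1}}{\overline V}),\qquad k_1+\dots+k_{p+1}\leq k-1 \] (in particular $G_0=0$).
   Context: $\mathbb R^{1+3}$ with coordinates $(x^0,\dots,x^3)$ and Minkowski metric $m=\mathrm{diag}(-1,1,1,1)$; indices raised/lowered with $m$, $\nabla_\mu=\partial/\partial x^\mu$, $\nabla^{(2)}$ the spacetime Hessian, $\Box=\nabla^\mu\nabla_\mu$, $D_{\overline V}={\overline V}^\mu\nabla_\mu$. Products are schematic, with indices contracted using $m$. *)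

(* Defs.v *)
From Stdlib Require Import Reals List Lia.
From Coquelicot Require Import Coquelicot.
Open Scope R_scope.

Inductive idx := I0 | I1 | I2 | I3.
Definition idx_eq_dec (i j : idx) : {i = j} + {i <> j}.
Proof. decide equality. Defined.

Definition pt := idx -> R.

Definition upd (x : pt) (i : idx) (t : R) : pt :=
  fun j => if idx_eq_dec j i then t else x j.

Definition sum4 (f : idx -> R) : R := f I0 + f I1 + f I2 + f I3.

(** Minkowski metric m = diag(-1,1,1,1) (its inverse has the same entries). *)
Definition eta (i : idx) : R := match i with I0 => -1 | _ => 1 end.

Definition partial (i : idx) (f : pt -> R) : pt -> R :=
  fun x => Derive (fun t => f (upd x i t)) (x i).

Definition dpart (l : list idx) (f : pt -> R) : pt -> R := fold_right partial f l.

Definition cont_at (f : pt -> R) (x : pt) : Prop :=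
  forall eps, 0 < eps -> exists del, 0 < del /\
    forall y, (forall i, Rabs (y i - x i) < del) -> Rabs (f y - f x) < eps.

Definition open_dom (Om : pt -> Prop) : Prop :=
  forall x, Om x -> exists del, 0 < del /\
    forall y, (forall i, Rabs (y i - x i) < del) -> Om y.

Definition smooth_on (Om : pt -> Prop) (f : pt -> R) : Prop :=
  forall (l : list idx) (x : pt), Om x ->
    cont_at (dpart l f) x /\
    forall i, ex_derive (fun t => dpart l f (upd x i t)) (x i).

(** Vector fields: V x a = V^a(x). *)
Definition vfield := pt -> idx -> R.

Definition smooth_vf (Om : pt -> Prop) (V : vfield) : Prop :=
  forall a, smooth_on Om (fun y => V y a).

Definition box (f : pt -> R) (x : pt) : R :=
  sum4 (fun i => eta i * partial i (partial i f) x).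

Definition DV (V W : vfield) : vfield :=
  fun x a => sum4 (fun mu => V x mu * partial mu (fun y => W y a) x).

Fixpoint DVk (V : vfield) (k : nat) : vfield :=
  match k with O => V | S k' => DV V (DVk V k') end.

(** Schematic terms
      c * (nabla D^{k_1} V) ... (nabla D^{k_p} V) (nabla^2 D^{k_{p+1}} V)
    with indices contracted using m and one free index.
    Each index slot carries a label (a nat); label 0 is the free index, and
    every other label occurring must occur exactly twice (contracted with m).
    A factor (k,(l1,l2)) of gfacs is nabla_{l1} (D_V^k V)_{l2}; the factor
    hfac = (k,(l1,l2,l3)) is nabla_{l1} nabla_{l2} (D_V^k V)_{l3}.
    All slots are written with lowered indices; contraction of a label is
    then done with m^{-1} (= diag(-1,1,1,1)) and the free index is raised. *)
Record term := mkTerm {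
  coef : R;
  gfacs : list (nat * (nat * nat));
  hfac : nat * (nat * nat * nat) }.

Definition term_labels (t : term) : list nat :=
  flat_map (fun g => fst (snd g) :: snd (snd g) :: nil) (gfacs t) ++
  (let '(_, (l1, l2, l3)) := hfac t in l1 :: l2 :: l3 :: nil).

Definition term_order (t : term) : nat :=
  fold_right Nat.add (fst (hfac t)) (map fst (gfacs t)).

Definition wf_term (t : term) : Prop :=
  count_occ Nat.eq_dec (term_labels t) 0%nat = 1%nat /\
  forall l, In l (term_labels t) -> l <> 0%nat ->
    count_occ Nat.eq_dec (term_labels t) l = 2%nat.

Definition asg := nat -> idx.
Definition updn (al : asg) (n : nat) (i : idx) : asg :=
  fun m => if Nat.eq_dec m n then i else al m.

Fixpoint sum_asg (n : nat) (F : asg -> R) (al : asg) : R :=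
  match n with
  | O => F al
  | S m => sum4 (fun i => sum_asg m F (updn al n i))
  end.

Definition low (V : vfield) (k : nat) (c : idx) : pt -> R :=
  fun y => eta c * DVk V k y c.

Definition gval (V : vfield) (x : pt) (al : asg) (g : nat * (nat * nat)) : R :=
  let '(k, (l1, l2)) := g in partial (al l1) (low V k (al l2)) x.

Definition hval (V : vfield) (x : pt) (al : asg) (h : nat * (nat * nat * nat)) : R :=
  let '(k, (l1, l2, l3)) := h in partial (al l1) (partial (al l2) (low V k (al l3))) x.

Definition contr_weight (t : term) (al : asg) : R :=
  fold_right Rmult 1
    (map (fun l => eta (al l))
       (filter (fun l => negb (Nat.eqb l 0)) (nodup Nat.eq_dec (term_labels t)))).

Definition term_val (V : vfield) (x : pt) (a : idx) (t : term) : R :=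
  coef t * eta a *
  sum_asg (fold_right Nat.max 0%nat (term_labels t))
    (fun al => contr_weight t al *
               fold_right Rmult 1 (map (gval V x al) (gfacs t)) *
               hval V x al (hfac t))
    (fun _ => a).

Definition evalG (G : list term) (V : vfield) (x : pt) (a : idx) : R :=
  fold_right Rplus 0 (map (term_val V x a) G).

(* Main.v *)
Require Import Defs.
From Stdlib Require Import Reals List Lia Lra FunctionalExtensionality.
From Coquelicot Require Import Coquelicot.
Open Scope R_scope.

Lemma exR_plus (f g : R -> R) x : ex_derive f x -> ex_derive g x -> ex_derive (fun t => f t + g t) x.
Proof. intros. exact (ex_derive_plus f g x H H0). Qed.
Lemma exR_const (c : R) x : ex_derive (fun _ : R => c) x.
Proof. exact (ex_derive_const c x). Qed.
Lemma DerR_plus (f g : R -> R) x : ex_derive f x -> ex_derive g x ->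
  Derive (fun t => f t + g t) x = Derive f x + Derive g x.
Proof. intros. exact (Derive_plus f g x H H0). Qed.

Lemma ball_R x d t : ball x d t -> Rabs (t - x) < d.
Proof. intros H. exact H. Qed.

Lemma upd_eq x i t : upd x i t i = t.
Proof. unfold upd. destruct (idx_eq_dec i i); congruence. Qed.
Lemma upd_neq x i j t : j <> i -> upd x i t j = x j.
Proof. intros H. unfold upd. destruct (idx_eq_dec j i); congruence. Qed.
Lemma upd_same x i : upd x i (x i) = x.
Proof. apply functional_extensionality. intros j. unfold upd. destruct (idx_eq_dec j i); subst; auto. Qed.
Lemma upd_upd_same x i s t : upd (upd x i s) i t = upd x i t.
Proof. apply functional_extensionality. intros j. unfold upd. destruct (idx_eq_dec j i); auto. Qed.
Lemma upd_comm x i j s t : i <> j -> upd (upd x i s) j t = upd (upd x j t) i s.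
Proof. intros H. apply functional_extensionality. intros k. unfold upd.
  destruct (idx_eq_dec k j); destruct (idx_eq_dec k i); subst; congruence. Qed.

Lemma upd_close x i t d : 0 < d -> Rabs (t - x i) < d -> forall j, Rabs (upd x i t j - x j) < d.
Proof. intros Hd Ht j. unfold upd. destruct (idx_eq_dec j i); subst; auto.
  rewrite Rminus_diag, Rabs_R0; auto. Qed.

Lemma open_loc Om x i : open_dom Om -> Om x -> locally (x i) (fun t => Om (upd x i t)).
Proof. intros HO Hx. destruct (HO x Hx) as [d [Hd Hy]].
  exists (mkposreal d Hd). intros t Ht. apply Hy. apply upd_close; auto. Qed.

Lemma partial_ext_Om Om (f g : pt -> R) i x : open_dom Om -> Om x -> (forall y, Om y -> f y = g y) ->
  partial i f x = partial i g x.
Proof. intros HO Hx Hfg. unfold partial. apply Derive_ext_loc.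
  generalize (open_loc Om x i HO Hx). apply filter_imp. intros t Ht. auto. Qed.

Lemma exd_ext_Om Om (f g : pt -> R) i x : open_dom Om -> Om x -> (forall y, Om y -> f y = g y) ->
  ex_derive (fun t => f (upd x i t)) (x i) -> ex_derive (fun t => g (upd x i t)) (x i).
Proof. intros HO Hx Hfg. apply ex_derive_ext_loc.
  generalize (open_loc Om x i HO Hx). apply filter_imp. intros t Ht. auto. Qed.

Lemma dpart_app l1 l2 f : dpart (l1 ++ l2) f = dpart l1 (dpart l2 f).
Proof. unfold dpart. apply fold_right_app. Qed.

Lemma dpart_ext_Om Om (f g : pt -> R) l : open_dom Om -> (forall y, Om y -> f y = g y) ->
  forall y, Om y -> dpart l f y = dpart l g y.
Proof. intros HO Hfg. induction l as [|i l IH]; intros y Hy; simpl; auto.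
  apply partial_ext_Om with Om; auto. Qed.

Lemma cont_at_const c x : cont_at (fun _ => c) x.
Proof. intros e He. exists 1. split; [lra|]. intros. rewrite Rminus_diag, Rabs_R0; auto. Qed.

Lemma cont_at_ext_Om Om (f g : pt -> R) x : open_dom Om -> Om x -> (forall y, Om y -> f y = g y) ->
  cont_at f x -> cont_at g x.
Proof. intros HO Hx Hfg Hc e He. destruct (Hc e He) as [d1 [Hd1 H1]].
  destruct (HO x Hx) as [d2 [Hd2 H2]].
  exists (Rmin d1 d2). split. apply Rmin_pos; auto.
  intros y Hy. rewrite <- (Hfg y), <- (Hfg x); auto.
  apply H1. intros i. eapply Rlt_le_trans; [apply Hy| apply Rmin_l].
  apply H2. intros i. eapply Rlt_le_trans; [apply Hy| apply Rmin_r]. Qed.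

Lemma cont_at_plus (f g : pt -> R) x : cont_at f x -> cont_at g x -> cont_at (fun y => f y + g y) x.
Proof. intros Hf Hg e He.
  destruct (Hf (e/2)) as [d1 [Hd1 H1]]; [lra|].
  destruct (Hg (e/2)) as [d2 [Hd2 H2]]; [lra|].
  exists (Rmin d1 d2). split. apply Rmin_pos; auto.
  intros y Hy.
  assert (A1 : Rabs (f y - f x) < e/2). { apply H1. intros i. eapply Rlt_le_trans; [apply Hy| apply Rmin_l]. }
  assert (A2 : Rabs (g y - g x) < e/2). { apply H2. intros i. eapply Rlt_le_trans; [apply Hy| apply Rmin_r]. }
  replace (f y + g y - (f x + g x)) with ((f y - f x) + (g y - g x)) by ring.
  eapply Rle_lt_trans. apply Rabs_triang. lra. Qed.

Lemma cont_at_mult (f g : pt -> R) x : cont_at f x -> cont_at g x -> cont_at (fun y => f y * g y) x.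
Proof. intros Hf Hg e He.
  set (A := Rabs (f x) + 1). set (B := Rabs (g x) + 1).
  assert (HA : 0 < A) by (unfold A; generalize (Rabs_pos (f x)); lra).
  assert (HB : 0 < B) by (unfold B; generalize (Rabs_pos (g x)); lra).
  destruct (Hf (e/(2*B))) as [d1 [Hd1 H1]]. { apply Rdiv_lt_0_compat; lra. }
  destruct (Hg (Rmin 1 (e/(2*A)))) as [d2 [Hd2 H2]]. { apply Rmin_pos; [lra|]. apply Rdiv_lt_0_compat; lra. }
  exists (Rmin d1 d2). split. apply Rmin_pos; auto.
  intros y Hy.
  assert (A1 : Rabs (f y - f x) < e/(2*B)). { apply H1. intros i. eapply Rlt_le_trans; [apply Hy| apply Rmin_l]. }
  assert (A2 : Rabs (g y - g x) < Rmin 1 (e/(2*A))). { apply H2. intros i. eapply Rlt_le_trans; [apply Hy| apply Rmin_r]. }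
  assert (A3 : Rabs (g y - g x) < 1) by (eapply Rlt_le_trans; [apply A2| apply Rmin_l]).
  assert (A4 : Rabs (g y - g x) < e/(2*A)) by (eapply Rlt_le_trans; [apply A2| apply Rmin_r]).
  assert (A5 : Rabs (g y) <= B).
  { unfold B. replace (g y) with ((g y - g x) + g x) by ring.
    eapply Rle_trans. apply Rabs_triang. lra. }
  replace (f y * g y - f x * g x) with ((f y - f x) * g y + f x * (g y - g x)) by ring.
  eapply Rle_lt_trans. apply Rabs_triang. rewrite !Rabs_mult.
  assert (E1 : Rabs (f y - f x) * Rabs (g y) <= e/(2*B) * B).
  { apply Rmult_le_compat; try apply Rabs_pos; lra. }
  assert (E2 : Rabs (f x) * Rabs (g y - g x) <= A * (e/(2*A))).
  { apply Rmult_le_compat; try apply Rabs_pos. unfold A; lra. lra. }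
  assert (E3 : Rabs (f y - f x) * Rabs (g y) < e/(2*B) * B \/ Rabs (f x) * Rabs (g y - g x) < A * (e/(2*A))).
  { destruct (Req_dec (Rabs (g y)) 0) as [Z|Z].
    - right. rewrite Z in *. 
      apply Rle_lt_trans with (A * Rabs (g y - g x)).
      apply Rmult_le_compat_r; [apply Rabs_pos| unfold A; lra].
      apply Rmult_lt_compat_l; auto.
    - left. apply Rlt_le_trans with (e/(2*B) * Rabs (g y)).
      apply Rmult_lt_compat_r; auto. generalize (Rabs_pos (g y)); lra.
      apply Rmult_le_compat_l; [|lra]. apply Rlt_le, Rdiv_lt_0_compat; lra. }
  replace (e/(2*B) * B) with (e/2) in * by (field; lra).
  replace (A * (e/(2*A))) with (e/2) in * by (field; lra).
  lra. Qed.

Definition exd (f : pt -> R) i x := ex_derive (fun t => f (upd x i t)) (x i).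

Lemma partial_plus (f g : pt -> R) i x : exd f i x -> exd g i x ->
  partial i (fun y => f y + g y) x = partial i f x + partial i g x.
Proof. intros. unfold partial. apply (DerR_plus (fun t => f (upd x i t)) (fun t => g (upd x i t))); auto. Qed.
Lemma partial_mult (f g : pt -> R) i x : exd f i x -> exd g i x ->
  partial i (fun y => f y * g y) x = partial i f x * g x + f x * partial i g x.
Proof. intros. unfold partial. rewrite (Derive_mult (fun t => f (upd x i t)) (fun t => g (upd x i t))); auto.
  rewrite upd_same. auto. Qed.
Lemma partial_scal c (f : pt -> R) i x : partial i (fun y => c * f y) x = c * partial i f x.
Proof. unfold partial. apply Derive_scal. Qed.
Lemma partial_scal_fun c (f : pt -> R) i : partial i (fun y => c * f y) = fun y => c * partial i f y.
Proof. apply functional_extensionality. intros. apply partial_scal. Qed.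
Lemma partial_const c i x : partial i (fun _ => c) x = 0.
Proof. unfold partial. apply Derive_const. Qed.
Lemma exd_plus (f g : pt -> R) i x : exd f i x -> exd g i x -> exd (fun y => f y + g y) i x.
Proof. unfold exd. intros. apply (exR_plus (fun t => f (upd x i t)) (fun t => g (upd x i t))); auto. Qed.
Lemma exd_mult (f g : pt -> R) i x : exd f i x -> exd g i x -> exd (fun y => f y * g y) i x.
Proof. unfold exd. intros. apply (ex_derive_mult (fun t => f (upd x i t)) (fun t => g (upd x i t))); auto. Qed.
Lemma exd_scal c (f : pt -> R) i x : exd f i x -> exd (fun y => c * f y) i x.
Proof. unfold exd. intros. apply (ex_derive_scal (fun t => f (upd x i t))); auto. Qed.
Lemma exd_const c i x : exd (fun _ => c) i x.
Proof. unfold exd. apply exR_const. Qed.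

Section Smooth.
Variable Om : pt -> Prop.
Hypothesis HO : open_dom Om.

Lemma Sm_exd f i x : smooth_on Om f -> Om x -> exd f i x.
Proof. intros H Hx. exact (proj2 (H nil x Hx) i). Qed.

Lemma Sm_partial f i : smooth_on Om f -> smooth_on Om (partial i f).
Proof. intros H l x Hx. change (partial i f) with (dpart (i::nil) f). rewrite <- dpart_app. apply H; auto. Qed.

Lemma Sm_ext f g : (forall y, f y = g y) -> smooth_on Om f -> smooth_on Om g.
Proof. intros E. replace g with f; auto. apply functional_extensionality; auto. Qed.

Lemma dpart_const c l : exists c', dpart l (fun _ => c) = fun _ => c'.
Proof. induction l as [|i l [c' IH]]; simpl. exists c; auto.
  rewrite IH. exists 0. apply functional_extensionality. intros. apply partial_const. Qed.

Lemma Sm_const c : smooth_on Om (fun _ => c).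
Proof. intros l x Hx. destruct (dpart_const c l) as [c' E]. rewrite E. split.
  apply cont_at_const. intros. apply exR_const. Qed.

Definition spp (ps : list ((pt -> R) * (pt -> R))) : pt -> R :=
  fun y => fold_right (fun p acc => fst p y * snd p y + acc) 0 ps.

Definition dps i (ps : list ((pt -> R) * (pt -> R))) :=
  flat_map (fun p => (partial i (fst p), snd p) :: (fst p, partial i (snd p)) :: nil) ps.

Lemma spp_base ps x : (forall p, In p ps -> smooth_on Om (fst p) /\ smooth_on Om (snd p)) -> Om x ->
  cont_at (spp ps) x /\ forall i, exd (spp ps) i x.
Proof. intros Hp Hx. induction ps as [|p ps IH].
  - split. apply cont_at_const. intros. apply exd_const.
  - assert (H1 := Hp p (or_introl eq_refl)). destruct H1 as [H1 H2].
    destruct IH as [IH1 IH2]. intros; apply Hp; simpl; auto.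
    split.
    + apply (cont_at_plus (fun y => fst p y * snd p y) (spp ps)); auto.
      apply cont_at_mult. apply (H1 nil); auto. apply (H2 nil); auto.
    + intros i. apply (exd_plus (fun y => fst p y * snd p y) (spp ps)); auto.
      apply exd_mult; apply Sm_exd; auto. Qed.

Lemma spp_partial ps i x : (forall p, In p ps -> smooth_on Om (fst p) /\ smooth_on Om (snd p)) -> Om x ->
  partial i (spp ps) x = spp (dps i ps) x.
Proof. intros Hp Hx. induction ps as [|p ps IH].
  - unfold spp; simpl. apply partial_const.
  - assert (H1 := Hp p (or_introl eq_refl)). destruct H1 as [H1 H2].
    assert (Hr : forall p, In p ps -> smooth_on Om (fst p) /\ smooth_on Om (snd p)) by (intros; apply Hp; simpl; auto).
    change (partial i (fun y => fst p y * snd p y + spp ps y) x = spp (dps i (p :: ps)) x).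
    rewrite partial_plus. rewrite partial_mult. rewrite IH; auto.
    unfold spp, dps; simpl. ring.
    apply Sm_exd; auto. apply Sm_exd; auto.
    apply exd_mult; apply Sm_exd; auto.
    apply (spp_base ps x Hr Hx). Qed.

Lemma dps_sm ps i : (forall p, In p ps -> smooth_on Om (fst p) /\ smooth_on Om (snd p)) ->
  forall p, In p (dps i ps) -> smooth_on Om (fst p) /\ smooth_on Om (snd p).
Proof. intros Hp p Hin. unfold dps in Hin. apply in_flat_map in Hin. destruct Hin as [q [Hq Hin]].
  destruct (Hp q Hq) as [A B]. simpl in Hin. destruct Hin as [E|[E|[]]]; subst; simpl; split; auto;
  apply Sm_partial; auto. Qed.

Lemma spp_smooth_gen l : forall ps, (forall p, In p ps -> smooth_on Om (fst p) /\ smooth_on Om (snd p)) ->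
  forall x, Om x -> cont_at (dpart l (spp ps)) x /\ forall i, exd (dpart l (spp ps)) i x.
Proof. induction l as [|i l IH] using rev_ind; intros ps Hp x Hx.
  - simpl. apply spp_base; auto.
  - rewrite dpart_app. simpl.
    assert (E : forall y, Om y -> dpart l (spp (dps i ps)) y = dpart l (partial i (spp ps)) y).
    { apply dpart_ext_Om; auto. intros y Hy. symmetry. apply spp_partial; auto. }
    destruct (IH (dps i ps) (dps_sm ps i Hp) x Hx) as [C D]. split.
    + apply cont_at_ext_Om with Om (dpart l (spp (dps i ps))); auto.
    + intros j. apply exd_ext_Om with Om (dpart l (spp (dps i ps))); auto.
  apply D. Qed.

Lemma Sm_mult f g : smooth_on Om f -> smooth_on Om g -> smooth_on Om (fun y => f y * g y).
Proof. intros Hf Hg. apply Sm_ext with (spp ((f,g)::nil)).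
  intros; unfold spp; simpl; ring.
  intros l x Hx. apply spp_smooth_gen; auto. intros p [E|[]]; subst; simpl; auto. Qed.

Lemma Sm_plus f g : smooth_on Om f -> smooth_on Om g -> smooth_on Om (fun y => f y + g y).
Proof. intros Hf Hg. apply Sm_ext with (spp ((f,fun _ => 1)::(g, fun _ => 1)::nil)).
  intros; unfold spp; simpl; ring.
  intros l x Hx. apply spp_smooth_gen; auto. intros p [E|[E|[]]]; subst; simpl; split; auto; apply Sm_const. Qed.

Lemma Sm_scal c f : smooth_on Om f -> smooth_on Om (fun y => c * f y).
Proof. intros. apply (Sm_mult (fun _ => c) f); auto. apply Sm_const. Qed.

Lemma Sm_sum4 (F : idx -> pt -> R) : (forall i, smooth_on Om (F i)) -> smooth_on Om (fun y => sum4 (fun i => F i y)).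
Proof. intros H. unfold sum4. repeat apply Sm_plus; auto. Qed.

End Smooth.

Section Schw.
Variables (x : pt) (i j : idx).
Hypothesis Hij : i <> j.

Lemma fun_i (g : pt -> R) u z : (fun t => g (upd (upd x i t) j z)) = (fun t => g (upd (upd (upd x i u) j z) i t)).
Proof. apply functional_extensionality. intros t. f_equal.
  rewrite (upd_comm (upd x i u) j i); auto. rewrite upd_upd_same. auto. Qed.
Lemma pi_i u z : upd (upd x i u) j z i = u.
Proof. rewrite upd_neq; auto. apply upd_eq. Qed.
Lemma fun_j (g : pt -> R) z v : (fun t => g (upd (upd x i z) j t)) = (fun t => g (upd (upd (upd x i z) j v) j t)).
Proof. apply functional_extensionality. intros t. rewrite upd_upd_same. auto. Qed.
Lemma pj_j z v : upd (upd x i z) j v j = v.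
Proof. apply upd_eq. Qed.

Lemma pt2_i (g : pt -> R) u z : Derive (fun t => g (upd (upd x i t) j z)) u = partial i g (upd (upd x i u) j z).
Proof. rewrite (fun_i g u z). unfold partial. rewrite pi_i. auto. Qed.
Lemma pt2_j (g : pt -> R) z v : Derive (fun t => g (upd (upd x i z) j t)) v = partial j g (upd (upd x i z) j v).
Proof. rewrite (fun_j g z v). unfold partial. rewrite pj_j. auto. Qed.
Lemma ex2_i (g : pt -> R) u z : exd g i (upd (upd x i u) j z) -> ex_derive (fun t => g (upd (upd x i t) j z)) u.
Proof. unfold exd. rewrite pi_i. rewrite <- fun_i. auto. Qed.
Lemma ex2_j (g : pt -> R) z v : exd g j (upd (upd x i z) j v) -> ex_derive (fun t => g (upd (upd x i z) j t)) v.
Proof. unfold exd. rewrite pj_j. rewrite <- fun_j. auto. Qed.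

Lemma close2 u v d : 0 < d -> Rabs (u - x i) < d -> Rabs (v - x j) < d ->
  forall k, Rabs (upd (upd x i u) j v k - x k) < d.
Proof. intros Hd Hu Hv k. unfold upd. destruct (idx_eq_dec k j); destruct (idx_eq_dec k i); subst; try (exfalso; congruence); auto.
  rewrite Rminus_diag, Rabs_R0; auto. Qed.

Lemma cont2 (g : pt -> R) : cont_at g x -> continuity_2d_pt (fun u v => g (upd (upd x i u) j v)) (x i) (x j).
Proof. intros Hc eps. destruct (Hc eps (cond_pos eps)) as [d [Hd H]].
  exists (mkposreal d Hd). intros u v Hu Hv. simpl in *.
  rewrite upd_same, upd_same. apply H. apply close2; auto. Qed.
End Schw.

Lemma schwarz Om f i j x : open_dom Om -> smooth_on Om f -> Om x ->
  partial i (partial j f) x = partial j (partial i f) x.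
Proof. intros HO Hf Hx. destruct (idx_eq_dec i j) as [E|Hij]. subst; auto.
  assert (Hji : j <> i) by congruence.
  set (f2 := fun u v => f (upd (upd x i u) j v)).
  assert (E1 : (fun u v => Derive (fun z => Derive (fun t => f2 z t) v) u) =
               (fun u v => partial i (partial j f) (upd (upd x i u) j v))).
  { apply functional_extensionality; intros u; apply functional_extensionality; intros v.
    unfold f2. transitivity (Derive (fun z => partial j f (upd (upd x i z) j v)) u).
    f_equal. apply functional_extensionality. intros z. apply pt2_j; auto.
    apply pt2_i; auto. }
  assert (E2 : (fun u v => Derive (fun z => Derive (fun t => f2 t z) u) v) =
               (fun u v => partial j (partial i f) (upd (upd x i u) j v))).
  { apply functional_extensionality; intros u; apply functional_extensionality; intros v.
    unfold f2. transitivity (Derive (fun z => partial i f (upd (upd x i u) j z)) v).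
    f_equal. apply functional_extensionality. intros z. apply pt2_i; auto.
    apply pt2_j; auto. }
  assert (S := Schwarz f2 (x i) (x j)).
  assert (R1 : (fun u v => Derive (fun z => Derive (fun t => f2 z t) v) u) (x i) (x j) =
     (fun u v => Derive (fun z => Derive (fun t => f2 t z) u) v) (x i) (x j)).
  { simpl. apply S.
    - destruct (HO x Hx) as [d [Hd Hy]]. exists (mkposreal d Hd). intros u v Hu Hv. simpl in Hu, Hv.
      assert (Hp : Om (upd (upd x i u) j v)) by (apply Hy; apply close2; auto).
      unfold f2. split; [|split; [|split]].
      + apply ex2_i; auto. apply Sm_exd with Om; auto.
      + apply ex2_j; auto. apply Sm_exd with Om; auto.
      + apply ex_derive_ext with (fun z => partial j f (upd (upd x i z) j v)).
        intros z. symmetry. apply pt2_j; auto.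
        apply ex2_i; auto. apply Sm_exd with Om; auto. apply Sm_partial; auto.
      + apply ex_derive_ext with (fun z => partial i f (upd (upd x i u) j z)).
        intros z. symmetry. apply pt2_i; auto.
        apply ex2_j; auto. apply Sm_exd with Om; auto. apply Sm_partial; auto.
    - rewrite E1. apply cont2; auto. apply (Hf (i :: j :: nil) x Hx).
    - rewrite E2. apply cont2; auto. apply (Hf (j :: i :: nil) x Hx). }
  assert (A := equal_f (equal_f E1 (x i)) (x j)). assert (B := equal_f (equal_f E2 (x i)) (x j)).
  simpl in A, B, R1. rewrite !upd_same in A, B. rewrite <- A, <- B. exact R1. Qed.

Lemma sum4_ext (f g : idx -> R) : (forall i, f i = g i) -> sum4 f = sum4 g.
Proof. intros H. unfold sum4. rewrite !H. auto. Qed.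

Lemma partial_sum4 (F : idx -> pt -> R) i x : (forall mu, exd (F mu) i x) ->
  partial i (fun y => sum4 (fun mu => F mu y)) x = sum4 (fun mu => partial i (F mu) x).
Proof. intros H. unfold sum4.
  rewrite (partial_plus (fun y => F I0 y + F I1 y + F I2 y) (F I3)).
  rewrite (partial_plus (fun y => F I0 y + F I1 y) (F I2)).
  rewrite (partial_plus (F I0) (F I1)). auto.
    all: try apply (exd_plus (fun y => F I0 y + F I1 y) (F I2)); try apply (exd_plus (F I0) (F I1)); apply (H _). Qed.

Lemma exd_sum4 (F : idx -> pt -> R) i x : (forall mu, exd (F mu) i x) ->
  exd (fun y => sum4 (fun mu => F mu y)) i x.
Proof. intros H. unfold sum4.
  apply (exd_plus (fun y => F I0 y + F I1 y + F I2 y) (F I3)); [|apply (H _)].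
  apply (exd_plus (fun y => F I0 y + F I1 y) (F I2)); [|apply (H _)].
  apply (exd_plus (F I0) (F I1)); apply (H _). Qed.

Definition Dx (V : vfield) (f : pt -> R) (x : pt) : R := sum4 (fun mu => V x mu * partial mu f x).

Section VF.
Variable Om : pt -> Prop.
Hypothesis HO : open_dom Om.
Variable V : vfield.
Hypothesis HV : smooth_vf Om V.

Lemma Sm_Dx f : smooth_on Om f -> smooth_on Om (fun y => Dx V f y).
Proof. intros Hf. unfold Dx. apply Sm_sum4; auto. intros mu.
  apply Sm_mult; auto; try apply HV; try (apply Sm_partial; auto). Qed.

Lemma Sm_W k a : smooth_on Om (fun y => DVk V k y a).
Proof. revert a. induction k as [|k IH]; intros a; simpl. apply HV.
  apply (Sm_Dx (fun y => DVk V k y a)). auto. Qed.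

Lemma Sm_low k c : smooth_on Om (low V k c).
Proof. unfold low. apply Sm_scal; auto. apply Sm_W. Qed.

Lemma Dx_low k c : (fun y => Dx V (low V k c) y) = low V (S k) c.
Proof. apply functional_extensionality. intros y. unfold low, Dx. simpl. unfold DV.
  unfold sum4. rewrite !partial_scal. ring. Qed.

End VF.
Section VF2.
Variable Om : pt -> Prop.
Hypothesis HO : open_dom Om.
Variable V : vfield.
Hypothesis HV : smooth_vf Om V.

Lemma exd_Vp mu (f : pt -> R) i x : smooth_on Om f -> Om x -> exd (fun y => V y mu * f y) i x.
Proof. intros Hf Hx. apply exd_mult; apply Sm_exd with Om; auto; apply HV. Qed.

Lemma C1 f i x : smooth_on Om f -> Om x ->
  partial i (fun y => Dx V f y) x = Dx V (partial i f) x +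
    sum4 (fun mu => partial i (fun y => V y mu) x * partial mu f x).
Proof. intros Hf Hx. unfold Dx at 1.
  rewrite (partial_sum4 (fun mu y => V y mu * partial mu f y)).
  2:{ intros mu. apply exd_Vp; auto. apply Sm_partial; auto. }
  rewrite (sum4_ext _ (fun mu => partial i (fun y => V y mu) x * partial mu f x + V x mu * partial mu (partial i f) x)).
  unfold Dx, sum4. ring.
  intros mu. rewrite (partial_mult (fun y => V y mu) (partial mu f)).
  rewrite (schwarz Om f i mu x); auto.
  all: apply Sm_exd with Om; auto; try apply HV; try (apply Sm_partial; auto). Qed.

Lemma C2 f i l x : smooth_on Om f -> Om x ->
  partial i (partial l (fun y => Dx V f y)) x = Dx V (partial i (partial l f)) x +
    sum4 (fun mu => partial i (fun y => V y mu) x * partial l (partial mu f) x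
                  + partial i (partial l (fun y => V y mu)) x * partial mu f x
                  + partial l (fun y => V y mu) x * partial i (partial mu f) x).
Proof. intros Hf Hx.
  assert (Hlf : smooth_on Om (partial l f)) by (apply Sm_partial; auto).
  set (S := fun y => sum4 (fun mu => partial l (fun y => V y mu) y * partial mu f y)).
  assert (E1 : partial i (partial l (fun y => Dx V f y)) x = partial i (fun y => Dx V (partial l f) y + S y) x).
  { apply (partial_ext_Om Om); auto. intros y Hy. apply C1; auto. }
  assert (E2 : partial i (fun y => Dx V (partial l f) y + S y) x = partial i (fun y => Dx V (partial l f) y) x + partial i S x).
  { apply (partial_plus (fun y => Dx V (partial l f) y) S).
    apply Sm_exd with Om; auto. apply Sm_Dx; auto.
    apply exd_sum4. intros mu. apply exd_mult; apply Sm_exd with Om; auto; apply Sm_partial; auto; try apply HV. }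
  assert (E3 := C1 (partial l f) i x Hlf Hx).
  assert (E4 : partial i S x = sum4 (fun mu => partial i (partial l (fun y => V y mu)) x * partial mu f x
                   + partial l (fun y => V y mu) x * partial i (partial mu f) x)).
  { unfold S. rewrite (partial_sum4 (fun mu y => partial l (fun y => V y mu) y * partial mu f y)).
    apply sum4_ext. intros mu. apply partial_mult; apply Sm_exd with Om; auto; apply Sm_partial; auto; try apply HV.
    intros mu. apply exd_mult; apply Sm_exd with Om; auto; apply Sm_partial; auto; try apply HV. }
  assert (E5 : forall mu, partial mu (partial l f) x = partial l (partial mu f) x).
  { intros mu. apply (schwarz Om); auto. }
  rewrite E1, E2, E3, E4. unfold sum4. rewrite !E5. ring. Qed.
End VF2.

From Stdlib Require Import Permutation.

Definition maxL (L : list nat) : nat := fold_right Nat.max 0%nat L.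

Lemma maxL_ge L m : In m L -> (m <= maxL L)%nat.
Proof. induction L as [|a L IH]; simpl; [tauto|]. intros [E|H]; subst; [lia|]. specialize (IH H). lia. Qed.

Lemma maxL_sub L L' : (forall m, In m L -> In m L') -> (maxL L <= maxL L')%nat.
Proof. induction L as [|a L IH]; simpl; intros H; [lia|].
  assert (A := maxL_ge L' a (H a (or_introl eq_refl))).
  assert (B : (maxL L <= maxL L')%nat) by (apply IH; auto). lia. Qed.

Lemma maxL_In L L' : (forall m, In m L <-> In m L') -> maxL L = maxL L'.
Proof. intros H. apply Nat.le_antisymm; apply maxL_sub; intros m; apply H. Qed.

Definition cwL (L : list nat) (b : asg) : R :=
  fold_right Rmult 1 (map (fun l => eta (b l)) (filter (fun l => negb (Nat.eqb l 0)) (nodup Nat.eq_dec L))).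

Lemma perm_filter (f : nat -> bool) l l' : Permutation l l' -> Permutation (filter f l) (filter f l').
Proof. induction 1; simpl; auto.
  - destruct (f x); auto.
  - destruct (f x); destruct (f y); auto. apply perm_swap.
  - eapply perm_trans; eauto. Qed.

Lemma perm_prod (l l' : list R) : Permutation l l' -> fold_right Rmult 1 l = fold_right Rmult 1 l'.
Proof. induction 1; simpl; [auto | rewrite IHPermutation; auto | ring | congruence]. Qed.

Lemma cwL_In L L' b : (forall m, In m L <-> In m L') -> cwL L b = cwL L' b.
Proof. intros H. unfold cwL. apply perm_prod. apply Permutation_map. apply perm_filter.
  apply NoDup_Permutation; try apply NoDup_nodup. intros m. rewrite !nodup_In. apply H. Qed.

Lemma cwL_cons n L b : ~ In n L -> n <> 0%nat -> cwL (n :: L) b = eta (b n) * cwL L b.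
Proof. intros H1 H2. unfold cwL. simpl. destruct (in_dec Nat.eq_dec n L); [tauto|]. simpl.
  destruct (Nat.eqb_spec n 0); [tauto|]. simpl. auto. Qed.

Lemma updn_eq b n i : updn b n i n = i.
Proof. unfold updn. destruct (Nat.eq_dec n n); congruence. Qed.
Lemma updn_neq b n i m : m <> n -> updn b n i m = b m.
Proof. intros H. unfold updn. destruct (Nat.eq_dec m n); congruence. Qed.

Lemma cwL_updn L b n i : ~ In n L -> cwL L (updn b n i) = cwL L b.
Proof. intros H. unfold cwL. f_equal. apply map_ext_in. intros m Hm.
  apply filter_In in Hm. destruct Hm as [Hm _]. apply nodup_In in Hm.
  rewrite updn_neq; auto. intros E; subst; auto. Qed.

Definition newlab (L' L : list nat) (n : nat) : Prop :=
  forall m, count_occ Nat.eq_dec L' m = (count_occ Nat.eq_dec L m + if Nat.eq_dec n m then 2 else 0)%nat.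

Lemma newlab_In L' L n : newlab L' L n -> forall m, In m L' <-> In m (n :: L).
Proof. intros H m. rewrite !(count_occ_In Nat.eq_dec). rewrite H. simpl.
  destruct (Nat.eq_dec n m); lia. Qed.

Lemma newlab_max L' L : newlab L' L (S (maxL L)) -> maxL L' = S (maxL L).
Proof. intros H. rewrite (maxL_In L' (S (maxL L) :: L)) by (apply newlab_In; auto).
  change (Nat.max (S (maxL L)) (maxL L) = S (maxL L)). lia. Qed.

Lemma notin_max L : ~ In (S (maxL L)) L.
Proof. intros H. apply maxL_ge in H. lia. Qed.

Lemma newlab_cw L' L b : newlab L' L (S (maxL L)) -> cwL L' b = eta (b (S (maxL L))) * cwL L b.
Proof. intros H. rewrite (cwL_In L' (S (maxL L) :: L)) by (apply newlab_In; auto).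
  apply cwL_cons. apply notin_max. lia. Qed.

Definition wfL (L : list nat) : Prop :=
  count_occ Nat.eq_dec L 0%nat = 1%nat /\
  forall l, In l L -> l <> 0%nat -> count_occ Nat.eq_dec L l = 2%nat.

Lemma newlab_wf L' L : newlab L' L (S (maxL L)) -> wfL L -> wfL L'.
Proof. intros H [W1 W2]. split.
  - rewrite H. destruct (Nat.eq_dec (S (maxL L)) 0); lia.
  - intros l Hl Hl0. rewrite H. destruct (Nat.eq_dec (S (maxL L)) l).
    + subst. assert (~ In (S (maxL L)) L) by apply notin_max.
      rewrite (count_occ_not_In Nat.eq_dec) in H0. lia.
    + apply (newlab_In L' L _ H) in Hl. destruct Hl as [E|Hl]; [congruence|].
      rewrite W2; auto. Qed.

Definition EDx (f : pt -> R) x := forall i, exd f i x.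

Lemma EDx_plus f g x : EDx f x -> EDx g x -> EDx (fun y => f y + g y) x.
Proof. intros A B i. apply exd_plus; auto. Qed.
Lemma EDx_mult f g x : EDx f x -> EDx g x -> EDx (fun y => f y * g y) x.
Proof. intros A B i. apply exd_mult; auto. Qed.
Lemma EDx_scal c f x : EDx f x -> EDx (fun y => c * f y) x.
Proof. intros A i. apply exd_scal; auto. Qed.
Lemma EDx_const c x : EDx (fun _ => c) x.
Proof. intros i. apply exd_const. Qed.
Lemma EDx_sum4 (G : idx -> pt -> R) x : (forall nu, EDx (G nu) x) -> EDx (fun y => sum4 (fun nu => G nu y)) x.
Proof. intros A i. apply exd_sum4. intros; apply A. Qed.

Lemma Dx_plus V f g x : EDx f x -> EDx g x -> Dx V (fun y => f y + g y) x = Dx V f x + Dx V g x.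
Proof. intros A B. unfold Dx. rewrite (sum4_ext _ (fun mu => V x mu * (partial mu f x + partial mu g x))).
  unfold sum4; ring. intros mu. rewrite partial_plus; auto. Qed.
Lemma Dx_mult V f g x : EDx f x -> EDx g x -> Dx V (fun y => f y * g y) x = Dx V f x * g x + f x * Dx V g x.
Proof. intros A B. unfold Dx. rewrite (sum4_ext _ (fun mu => V x mu * (partial mu f x * g x + f x * partial mu g x))).
  unfold sum4; ring. intros mu. rewrite partial_mult; auto. Qed.
Lemma Dx_scal V c f x : Dx V (fun y => c * f y) x = c * Dx V f x.
Proof. unfold Dx. rewrite (sum4_ext _ (fun mu => V x mu * (c * partial mu f x))).
  unfold sum4; ring. intros mu. rewrite partial_scal; auto. Qed.
Lemma Dx_const V c x : Dx V (fun _ => c) x = 0.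
Proof. unfold Dx. rewrite (sum4_ext _ (fun mu => 0)). unfold sum4; ring. intros mu. rewrite partial_const; ring. Qed.
Lemma Dx_sum4 V (G : idx -> pt -> R) x : (forall nu, EDx (G nu) x) ->
  Dx V (fun y => sum4 (fun nu => G nu y)) x = sum4 (fun nu => Dx V (G nu) x).
Proof. intros A. unfold Dx at 1. rewrite (sum4_ext _ (fun mu => V x mu * sum4 (fun nu => partial mu (G nu) x))).
  unfold Dx, sum4; ring. intros mu. rewrite partial_sum4; auto. intros nu; apply A. Qed.
Lemma Dx_ext_Om Om V f g x : open_dom Om -> Om x -> (forall y, Om y -> f y = g y) -> Dx V f x = Dx V g x.
Proof. intros HO Hx H. unfold Dx. apply sum4_ext. intros mu. f_equal. apply (partial_ext_Om Om); auto. Qed.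

Lemma sum_asg_ext n (F G : asg -> R) al : (forall b, F b = G b) -> sum_asg n F al = sum_asg n G al.
Proof. intros H. replace G with F; auto. apply functional_extensionality; auto. Qed.

Lemma sum_asg_plus n F G al : sum_asg n (fun b => F b + G b) al = sum_asg n F al + sum_asg n G al.
Proof. revert al. induction n as [|n IH]; intros al; simpl; auto.
  rewrite (sum4_ext _ (fun i => sum_asg n F (updn al (S n) i) + sum_asg n G (updn al (S n) i))).
  unfold sum4; ring. intros; apply IH. Qed.
Lemma sum_asg_scal n c F al : sum_asg n (fun b => c * F b) al = c * sum_asg n F al.
Proof. revert al. induction n as [|n IH]; intros al; simpl; auto.
  rewrite (sum4_ext _ (fun i => c * sum_asg n F (updn al (S n) i))).
  unfold sum4; ring. intros; apply IH. Qed.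
Lemma sum_asg_0 n al : sum_asg n (fun _ => 0) al = 0.
Proof. revert al. induction n as [|n IH]; intros al; simpl; auto.
  rewrite (sum4_ext _ (fun i => 0)). unfold sum4; ring. intros; apply IH. Qed.
Lemma sum_asg_sum4 n (G : idx -> asg -> R) al :
  sum_asg n (fun b => sum4 (fun nu => G nu b)) al = sum4 (fun nu => sum_asg n (G nu) al).
Proof. unfold sum4 at 1. rewrite !sum_asg_plus. auto. Qed.

Lemma updn_comm b m n i j : m <> n -> updn (updn b m i) n j = updn (updn b n j) m i.
Proof. intros H. apply functional_extensionality. intros k. unfold updn.
  destruct (Nat.eq_dec k n); destruct (Nat.eq_dec k m); subst; congruence. Qed.

Lemma sum_asg_shift n M F al nu : (n < M)%nat ->
  sum_asg n F (updn al M nu) = sum_asg n (fun b => F (updn b M nu)) al.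
Proof. revert al. induction n as [|n IH]; intros al H; simpl; auto.
  apply sum4_ext. intros i. rewrite updn_comm by lia. apply IH. lia. Qed.

Lemma sum_asg_S n F al : sum_asg (S n) F al = sum_asg n (fun b => sum4 (fun nu => F (updn b (S n) nu))) al.
Proof. rewrite sum_asg_sum4. simpl. apply sum4_ext. intros nu. apply sum_asg_shift. lia. Qed.

Lemma EDx_sum_asg n (F : pt -> asg -> R) al x : (forall b, EDx (fun y => F y b) x) ->
  EDx (fun y => sum_asg n (F y) al) x.
Proof. revert al. induction n as [|n IH]; intros al H; simpl; auto.
  apply (EDx_sum4 (fun i y => sum_asg n (F y) (updn al (S n) i))). intros; apply IH; auto. Qed.

Lemma Dx_sum_asg V n (F : pt -> asg -> R) al x : (forall b, EDx (fun y => F y b) x) ->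
  Dx V (fun y => sum_asg n (F y) al) x = sum_asg n (fun b => Dx V (fun y => F y b) x) al.
Proof. revert al. induction n as [|n IH]; intros al H; simpl; auto.
  rewrite (Dx_sum4 V (fun i y => sum_asg n (F y) (updn al (S n) i))).
  apply sum4_ext. intros; apply IH; auto.
  intros; apply EDx_sum_asg; auto. Qed.

Definition prodg V x b (gs : list (nat * (nat * nat))) := fold_right Rmult 1 (map (gval V x b) gs).
Definition Ft V x t b := contr_weight t b * prodg V x b (gfacs t) * hval V x b (hfac t).
Definition Nt t := maxL (term_labels t).
Lemma tv_eq V x a t : term_val V x a t = coef t * eta a * sum_asg (Nt t) (fun b => Ft V x t b) (fun _ => a).
Proof. reflexivity. Qed.

Section VF3.
Variable Om : pt -> Prop.
Hypothesis HO : open_dom Om.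
Variable V : vfield.
Hypothesis HV : smooth_vf Om V.

Lemma pl0 i nu x : partial i (low V 0 nu) x = eta nu * partial i (fun y => V y nu) x.
Proof. apply partial_scal. Qed.
Lemma ppl0 i l nu x : partial i (partial l (low V 0 nu)) x = eta nu * partial i (partial l (fun y => V y nu)) x.
Proof. unfold low. simpl. rewrite partial_scal_fun. apply partial_scal. Qed.

Lemma S1 j i c x : Om x -> Dx V (partial i (low V j c)) x =
  partial i (low V (S j) c) x - sum4 (fun nu => eta nu * partial i (low V 0 nu) x * partial nu (low V j c) x).
Proof. intros Hx. rewrite <- Dx_low. rewrite (C1 Om HO V HV); auto. 2: apply Sm_low; auto.
  unfold sum4. rewrite !pl0. simpl. ring. Qed.

Lemma S2 j i l c x : Om x -> Dx V (partial i (partial l (low V j c))) x =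
  partial i (partial l (low V (S j) c)) x - sum4 (fun nu => eta nu *
    (partial i (partial l (low V 0 nu)) x * partial nu (low V j c) x
     + partial i (low V 0 nu) x * partial l (partial nu (low V j c)) x
     + partial l (low V 0 nu) x * partial i (partial nu (low V j c)) x)).
Proof. intros Hx. rewrite <- Dx_low. rewrite (C2 Om HO V HV); auto. 2: apply Sm_low; auto.
  unfold sum4. rewrite !pl0, !ppl0. simpl. ring. Qed.

Lemma S0 f x : smooth_on Om f -> Om x ->
  box (fun y => Dx V f y) x = Dx V (fun y => box f y) x +
    2 * sum4 (fun i => eta i * sum4 (fun mu => partial i (fun y => V y mu) x * partial i (partial mu f) x)) +
    sum4 (fun mu => box (fun y => V y mu) x * partial mu f x).
Proof. intros Hf Hx. unfold box at 1.
  rewrite (sum4_ext _ (fun i => eta i * (Dx V (partial i (partial i f)) x +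
    sum4 (fun mu => partial i (fun y => V y mu) x * partial i (partial mu f) x
                  + partial i (partial i (fun y => V y mu)) x * partial mu f x
                  + partial i (fun y => V y mu) x * partial i (partial mu f) x)))).
  2:{ intros i. rewrite (C2 Om HO V HV); auto. }
  unfold box.
  rewrite (Dx_sum4 V (fun i y => eta i * partial i (partial i f) y)).
  2:{ intros i. apply EDx_scal. intros k. apply Sm_exd with Om; auto. do 2 apply Sm_partial; auto. }
  rewrite (sum4_ext (fun i => Dx V (fun y => eta i * partial i (partial i f) y) x)
              (fun i => eta i * Dx V (partial i (partial i f)) x)).
  2:{ intros i. apply Dx_scal. }
  unfold sum4. ring. Qed.

Lemma Sm_gval b g : smooth_on Om (fun y => gval V y b g).
Proof. destruct g as [k [l1 l2]]. simpl. apply Sm_partial; auto. apply Sm_low; auto. Qed.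
Lemma Sm_hval b h : smooth_on Om (fun y => hval V y b h).
Proof. destruct h as [k [[l1 l2] l3]]. simpl. apply Sm_partial; auto. apply Sm_partial; auto. apply Sm_low; auto. Qed.
Lemma Sm_prodg b gs : smooth_on Om (fun y => prodg V y b gs).
Proof. induction gs as [|g gs IH]; unfold prodg; simpl. apply Sm_const.
  apply (Sm_mult Om HO (fun y => gval V y b g) (fun y => prodg V y b gs)); auto. apply Sm_gval. Qed.
Lemma Sm_Ft t b : smooth_on Om (fun y => Ft V y t b).
Proof. unfold Ft. apply (Sm_mult Om HO (fun y => contr_weight t b * prodg V y b (gfacs t))); auto.
  apply Sm_scal; auto. apply Sm_prodg. apply Sm_hval. Qed.
Lemma Sm_sum_asg n (F : pt -> asg -> R) al : (forall b, smooth_on Om (fun y => F y b)) ->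
  smooth_on Om (fun y => sum_asg n (F y) al).
Proof. revert al. induction n as [|n IH]; intros al H; simpl; auto.
  apply (Sm_sum4 Om HO (fun i y => sum_asg n (F y) (updn al (S n) i))). intros; apply IH; auto. Qed.
Lemma Sm_tv a t : smooth_on Om (fun y => term_val V y a t).
Proof. apply Sm_ext with (fun y => coef t * eta a * sum_asg (Nt t) (fun b => Ft V y t b) (fun _ => a)).
  intros; symmetry; apply tv_eq. apply Sm_scal; auto. apply (Sm_sum_asg (Nt t) (fun y b => Ft V y t b)).
  intros; apply Sm_Ft. Qed.
Lemma Sm_EDx f x : smooth_on Om f -> Om x -> EDx f x.
Proof. intros H Hx i. apply Sm_exd with Om; auto. Qed.
End VF3.

Definition gl (g : nat * (nat * nat)) : list nat := fst (snd g) :: snd (snd g) :: nil.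
Definition hl (h : nat * (nat * nat * nat)) : list nat := let '(_, (l1, l2, l3)) := h in l1 :: l2 :: l3 :: nil.

Lemma tl_mk c gs h : term_labels (mkTerm c gs h) = flat_map gl gs ++ hl h.
Proof. destruct h as [k [[l1 l2] l3]]. reflexivity. Qed.

Definition hstep (n : nat) (c : R) gs (h : nat * (nat * nat * nat)) : list term :=
  let '(j, (l1, l2, l3)) := h in
  mkTerm c gs (S j, (l1, l2, l3)) ::
  mkTerm (-c) (gs ++ (j, (n, l3)) :: nil) (0%nat, (l1, l2, n)) ::
  mkTerm (-c) (gs ++ (0%nat, (l1, n)) :: nil) (j, (l2, n, l3)) ::
  mkTerm (-c) (gs ++ (0%nat, (l2, n)) :: nil) (j, (l1, n, l3)) :: nil.

Fixpoint gsteps (n : nat) (c : R) h (pre post : list (nat * (nat * nat))) : list term :=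
  match post with
  | nil => nil
  | g :: rest => let '(j, (l1, l2)) := g in
      mkTerm c (pre ++ (S j, (l1, l2)) :: rest) h ::
      mkTerm (-c) (pre ++ (0%nat, (l1, n)) :: (j, (n, l2)) :: rest) h ::
      gsteps n c h (pre ++ g :: nil) rest
  end.

Definition step (t : term) : list term :=
  gsteps (S (Nt t)) (coef t) (hfac t) nil (gfacs t) ++ hstep (S (Nt t)) (coef t) (gfacs t) (hfac t).

Definition sumf (gs : list (nat * (nat * nat))) : nat := fold_right Nat.add 0%nat (map fst gs).
Lemma ord_mk c gs h : term_order (mkTerm c gs h) = (sumf gs + fst h)%nat.
Proof. unfold term_order, sumf. simpl. induction gs as [|g gs IH]; simpl; lia. Qed.
Lemma sumf_app a b : sumf (a ++ b) = (sumf a + sumf b)%nat.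
Proof. unfold sumf. rewrite map_app, fold_right_app. generalize (fold_right Nat.add 0%nat (map fst b)). induction a as [|g a IH]; intros k; simpl; [lia|rewrite IH; lia]. Qed.

Definition lab_ok t t' : Prop :=
  (term_labels t' = term_labels t /\ (term_order t' <= S (term_order t))%nat) \/
  (newlab (term_labels t') (term_labels t) (S (Nt t)) /\ (term_order t' <= term_order t)%nat).

Ltac cnt := intros m; rewrite ?count_occ_app; simpl; repeat destruct Nat.eq_dec; lia.

Lemma nl_g A B H n l1 l2 : newlab ((A ++ l1 :: n :: n :: l2 :: B) ++ H) ((A ++ l1 :: l2 :: B) ++ H) n.
Proof. cnt. Qed.
Lemma nl_hb A n l1 l2 l3 : newlab ((A ++ n :: l3 :: nil) ++ l1 :: l2 :: n :: nil) (A ++ l1 :: l2 :: l3 :: nil) n.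
Proof. cnt. Qed.
Lemma nl_hc A n l1 l2 l3 : newlab ((A ++ l1 :: n :: nil) ++ l2 :: n :: l3 :: nil) (A ++ l1 :: l2 :: l3 :: nil) n.
Proof. cnt. Qed.
Lemma nl_hd A n l1 l2 l3 : newlab ((A ++ l2 :: n :: nil) ++ l1 :: n :: l3 :: nil) (A ++ l1 :: l2 :: l3 :: nil) n.
Proof. cnt. Qed.

Lemma gsteps_ok c gs h : forall post pre, pre ++ post = gs ->
  forall t', In t' (gsteps (S (Nt (mkTerm c gs h))) c h pre post) -> lab_ok (mkTerm c gs h) t'.
Proof. induction post as [|g rest IH]; intros pre Hpre t' Hin; simpl in Hin; [tauto|].
  destruct g as [j [l1 l2]]. subst gs.
  destruct Hin as [E|[E|Hin]].
  - subst t'. left. split.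
    + rewrite !tl_mk, !flat_map_app. reflexivity.
    + rewrite !ord_mk, !sumf_app. unfold sumf; simpl. lia.
  - subst t'. right. split.
    + unfold Nt. rewrite !tl_mk, !flat_map_app. apply nl_g.
    + rewrite !ord_mk, !sumf_app. unfold sumf; simpl. lia.
  - apply (IH (pre ++ (j, (l1, l2)) :: nil)); auto. rewrite <- app_assoc. reflexivity. Qed.

Lemma hstep_ok c gs h : forall t', In t' (hstep (S (Nt (mkTerm c gs h))) c gs h) -> lab_ok (mkTerm c gs h) t'.
Proof. destruct h as [j [[l1 l2] l3]]. intros t' Hin. simpl in Hin.
  destruct Hin as [E|[E|[E|[E|[]]]]]; subst t'.
  - left. split. reflexivity. rewrite !ord_mk. simpl. lia.
  - right. split. unfold Nt. rewrite !tl_mk, !flat_map_app. apply nl_hb.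
    rewrite !ord_mk, !sumf_app. unfold sumf; simpl. lia.
  - right. split. unfold Nt. rewrite !tl_mk, !flat_map_app. apply nl_hc.
    rewrite !ord_mk, !sumf_app. unfold sumf; simpl. lia.
  - right. split. unfold Nt. rewrite !tl_mk, !flat_map_app. apply nl_hd.
    rewrite !ord_mk, !sumf_app. unfold sumf; simpl. lia. Qed.

Lemma step_ok t t' : In t' (step t) -> lab_ok t t'.
Proof. destruct t as [c gs h]. unfold step. simpl. intros Hin. apply in_app_or in Hin. destruct Hin.
  - apply (gsteps_ok c gs h gs nil); auto.
  - apply hstep_ok; auto. Qed.

Lemma lab_ok_wf t t' : lab_ok t t' -> wf_term t -> wf_term t'.
Proof. intros [[E _]|[E _]] W; unfold wf_term in *.
  - rewrite E; auto.
  - apply (newlab_wf _ _ E W). Qed.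

Lemma lab_ok_Nt t t' : lab_ok t t' -> Nt t' = Nt t \/ Nt t' = S (Nt t).
Proof. intros [[E _]|[E _]]. left; unfold Nt; rewrite E; auto. right. apply newlab_max; auto. Qed.

Lemma gsteps_cons n c h pre j l1 l2 rest : gsteps n c h pre ((j, (l1, l2)) :: rest) =
  mkTerm c (pre ++ (S j, (l1, l2)) :: rest) h ::
  mkTerm (-c) (pre ++ (0%nat, (l1, n)) :: (j, (n, l2)) :: rest) h ::
  gsteps n c h (pre ++ (j, (l1, l2)) :: nil) rest.
Proof. reflexivity. Qed.

Ltac gen_atoms := repeat match goal with
   | |- context [gval ?V ?x ?b ?g] => generalize (gval V x b g); intro
   | |- context [hval ?V ?x ?b ?g] => generalize (hval V x b g); intro
   | |- context [prodg ?V ?x ?b ?g] => generalize (prodg V x b g); intro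
   | |- context [Dx ?V ?f ?x] => generalize (Dx V f x); intro
   | |- context [contr_weight ?t ?b] => generalize (contr_weight t b); intro
   end.

Section Sem.
Variable Om : pt -> Prop.
Hypothesis HO : open_dom Om.
Variable V : vfield.
Hypothesis HV : smooth_vf Om V.
Variable x : pt.
Hypothesis Hx : Om x.

Lemma gval_updn b n nu g : ~ In n (gl g) -> gval V x (updn b n nu) g = gval V x b g.
Proof. destruct g as [k [l1 l2]]. simpl. intros H. rewrite !updn_neq; auto; intros E; apply H; subst; auto. Qed.
Lemma hval_updn b n nu h : ~ In n (hl h) -> hval V x (updn b n nu) h = hval V x b h.
Proof. destruct h as [k [[l1 l2] l3]]. simpl. intros H. rewrite !updn_neq; auto; intros E; apply H; subst; auto. Qed.
Lemma prodg_updn b n nu gs : ~ In n (flat_map gl gs) -> prodg V x (updn b n nu) gs = prodg V x b gs.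
Proof. induction gs as [|g gs IH]; intros H; unfold prodg; simpl; auto.
  change (~ In n (gl g ++ flat_map gl gs)) in H. rewrite in_app_iff in H. rewrite gval_updn by tauto. unfold prodg in IH. rewrite IH by tauto. auto. Qed.
Lemma prodg_app b A B : prodg V x b (A ++ B) = prodg V x b A * prodg V x b B.
Proof. unfold prodg. rewrite map_app. induction A as [|g A IH]; simpl. ring. rewrite IH. ring. Qed.
Lemma prodg_cons b g A : prodg V x b (g :: A) = gval V x b g * prodg V x b A.
Proof. reflexivity. Qed.
Lemma prodg_nil b : prodg V x b nil = 1.
Proof. reflexivity. Qed.

Lemma L4 b n j l1 l2 : n <> l1 -> n <> l2 ->
  Dx V (fun y => gval V y b (j, (l1, l2))) x = gval V x b (S j, (l1, l2)) -
    sum4 (fun nu => eta nu * gval V x (updn b n nu) (0%nat, (l1, n)) * gval V x (updn b n nu) (j, (n, l2))).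
Proof. intros H1 H2. unfold gval; cbv beta iota.
  change (fun y => partial (b l1) (low V j (b l2)) y) with (partial (b l1) (low V j (b l2))).
  rewrite (S1 Om HO V HV); auto. f_equal. apply sum4_ext. intros nu.
  rewrite !updn_eq. rewrite !updn_neq by auto. auto. Qed.

Lemma L5 b n j l1 l2 l3 : n <> l1 -> n <> l2 -> n <> l3 ->
  Dx V (fun y => hval V y b (j, (l1, l2, l3))) x = hval V x b (S j, (l1, l2, l3)) -
    sum4 (fun nu => eta nu *
      (hval V x (updn b n nu) (0%nat, (l1, l2, n)) * gval V x (updn b n nu) (j, (n, l3))
       + gval V x (updn b n nu) (0%nat, (l1, n)) * hval V x (updn b n nu) (j, (l2, n, l3))
       + gval V x (updn b n nu) (0%nat, (l2, n)) * hval V x (updn b n nu) (j, (l1, n, l3)))).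
Proof. intros H1 H2 H3. unfold gval, hval; cbv beta iota.
  change (fun y => partial (b l1) (partial (b l2) (low V j (b l3))) y) with (partial (b l1) (partial (b l2) (low V j (b l3)))).
  rewrite (S2 Om HO V HV); auto. f_equal. apply sum4_ext. intros nu.
  rewrite !updn_eq. rewrite !updn_neq by auto. ring. Qed.

Definition Gv (N : nat) (t' : term) (b : asg) : R :=
  if Nat.eqb (Nt t') N then coef t' * Ft V x t' b
  else coef t' * sum4 (fun nu => Ft V x t' (updn b (S N) nu)).
Definition SG (N : nat) (L : list term) (b : asg) : R := fold_right Rplus 0 (map (fun t' => Gv N t' b) L).
Lemma SG_cons N t' L b : SG N (t' :: L) b = Gv N t' b + SG N L b.
Proof. reflexivity. Qed.
Lemma SG_nil N b : SG N nil b = 0.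
Proof. reflexivity. Qed.
Lemma SG_app N A B b : SG N (A ++ B) b = SG N A b + SG N B b.
Proof. induction A as [|t A IH]; simpl. unfold SG; simpl; ring. rewrite !SG_cons, IH. ring. Qed.

Lemma Gv_same N t' b : Nt t' = N -> Gv N t' b = coef t' * Ft V x t' b.
Proof. intros E. unfold Gv. rewrite E, Nat.eqb_refl. auto. Qed.
Lemma Gv_new N t' b : Nt t' = S N -> Gv N t' b = coef t' * sum4 (fun nu => Ft V x t' (updn b (S N) nu)).
Proof. intros E. unfold Gv. rewrite E. replace (Nat.eqb (S N) N) with false; auto.
  symmetry. apply Nat.eqb_neq. lia. Qed.

Lemma Ft_same t' t b : term_labels t' = term_labels t ->
  Ft V x t' b = contr_weight t b * prodg V x b (gfacs t') * hval V x b (hfac t').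
Proof. intros E. unfold Ft. f_equal. f_equal. change (cwL (term_labels t') b = cwL (term_labels t) b). rewrite E. auto. Qed.

Lemma Ft_new t' t b nu : newlab (term_labels t') (term_labels t) (S (Nt t)) ->
  Ft V x t' (updn b (S (Nt t)) nu) = eta nu * contr_weight t b *
    prodg V x (updn b (S (Nt t)) nu) (gfacs t') * hval V x (updn b (S (Nt t)) nu) (hfac t').
Proof. intros E. unfold Ft. f_equal. f_equal.
  change (cwL (term_labels t') (updn b (S (Nt t)) nu) = eta nu * cwL (term_labels t) b).
  unfold Nt in *. rewrite (newlab_cw _ _ _ E). rewrite updn_eq. rewrite cwL_updn; auto. apply notin_max. Qed.

Lemma EDx_gval b g : EDx (fun y => gval V y b g) x.
Proof. apply (Sm_EDx Om); auto. apply (Sm_gval Om HO V HV). Qed.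
Lemma EDx_prodg b gs : EDx (fun y => prodg V y b gs) x.
Proof. apply (Sm_EDx Om); auto. apply (Sm_prodg Om HO V HV). Qed.
Lemma EDx_hval b h : EDx (fun y => hval V y b h) x.
Proof. apply (Sm_EDx Om); auto. apply (Sm_hval Om HO V HV). Qed.

Lemma notin_parts (n : nat) (A B : list nat) : ~ In n (A ++ B) -> ~ In n A /\ ~ In n B.
Proof. rewrite in_app_iff. tauto. Qed.

Lemma gsteps_id c gs h : forall post pre, pre ++ post = gs -> forall b,
  SG (Nt (mkTerm c gs h)) (gsteps (S (Nt (mkTerm c gs h))) c h pre post) b =
  c * contr_weight (mkTerm c gs h) b * prodg V x b pre * Dx V (fun y => prodg V y b post) x * hval V x b h.
Proof. intros post. induction post as [|g rest IH]; intros pre Hpre b.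
  - simpl. rewrite SG_nil. change (fun y => prodg V y b nil) with (fun _ : pt => 1). rewrite Dx_const. ring.
  - destruct g as [j [l1 l2]]. rewrite gsteps_cons, !SG_cons.
    rewrite IH by (rewrite <- app_assoc; auto).
    set (t := mkTerm c gs h). fold t. set (N := Nt t).
    assert (Hn : ~ In (S N) (term_labels t)) by apply notin_max.
    assert (Lt : term_labels t = (flat_map gl pre ++ l1 :: l2 :: flat_map gl rest) ++ hl h).
    { unfold t. rewrite tl_mk. subst gs. rewrite flat_map_app. auto. }
    rewrite Lt in Hn. apply notin_parts in Hn. destruct Hn as [Hn Hh]. apply notin_parts in Hn. destruct Hn as [Hp Hn].
    simpl in Hn.
    assert (Hl1 : S N <> l1) by (intros E; apply Hn; auto). assert (Hl2 : S N <> l2) by (intros E; apply Hn; auto).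
    assert (Hr : ~ In (S N) (flat_map gl rest)) by tauto.
    assert (La : term_labels (mkTerm c (pre ++ (S j, (l1, l2)) :: rest) h) = term_labels t).
    { rewrite Lt, tl_mk, flat_map_app. auto. }
    rewrite Gv_same by (unfold Nt; rewrite La; auto).
    rewrite (Ft_same _ t) by auto. simpl gfacs; simpl hfac; simpl coef.
    assert (Lb : newlab (term_labels (mkTerm (-c) (pre ++ (0%nat, (l1, S N)) :: (j, (S N, l2)) :: rest) h)) (term_labels t) (S N)).
    { rewrite Lt, tl_mk, flat_map_app. apply nl_g. }
    rewrite Gv_new by (apply newlab_max; auto).
    rewrite (sum4_ext _ (fun nu => eta nu * contr_weight t b *
        (prodg V x b pre * (gval V x (updn b (S N) nu) (0%nat, (l1, S N)) *
          (gval V x (updn b (S N) nu) (j, (S N, l2)) * prodg V x b rest))) * hval V x b h)).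
    2:{ intros nu. rewrite (Ft_new _ t) by auto. simpl gfacs; simpl hfac.
        rewrite prodg_app, !prodg_cons, prodg_updn, prodg_updn, hval_updn; auto. }
    change (fun y => prodg V y b ((j, (l1, l2)) :: rest)) with
      (fun y => gval V y b (j, (l1, l2)) * prodg V y b rest).
    rewrite (Dx_mult V (fun y => gval V y b (j, (l1, l2))) (fun y => prodg V y b rest) x (EDx_gval b _) (EDx_prodg b rest)).
    rewrite (L4 b (S N)) by auto.
    rewrite !prodg_app, !prodg_cons, prodg_nil. simpl coef.
    unfold sum4. gen_atoms. ring. Qed.

Lemma Gv_new_g t c' gs' g' h' b :
  newlab (term_labels (mkTerm c' (gs' ++ g' :: nil) h')) (term_labels t) (S (Nt t)) ->
  ~ In (S (Nt t)) (flat_map gl gs') ->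
  Gv (Nt t) (mkTerm c' (gs' ++ g' :: nil) h') b = c' * sum4 (fun nu => eta nu * contr_weight t b *
     (prodg V x b gs' * (gval V x (updn b (S (Nt t)) nu) g' * 1)) * hval V x (updn b (S (Nt t)) nu) h').
Proof. intros E Hg. rewrite Gv_new by (apply newlab_max; auto). simpl coef. f_equal.
  apply sum4_ext. intros nu. rewrite (Ft_new _ t) by auto. simpl gfacs; simpl hfac.
  rewrite prodg_app, prodg_cons, prodg_nil, prodg_updn; auto. Qed.

Lemma hstep_id c gs h b : SG (Nt (mkTerm c gs h)) (hstep (S (Nt (mkTerm c gs h))) c gs h) b =
  c * contr_weight (mkTerm c gs h) b * prodg V x b gs * Dx V (fun y => hval V y b h) x.
Proof. destruct h as [j [[l1 l2] l3]].
  set (t := mkTerm c gs (j, (l1, l2, l3))). set (N := Nt t).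
  assert (Hn : ~ In (S N) (term_labels t)) by apply notin_max.
  assert (Lt : term_labels t = flat_map gl gs ++ l1 :: l2 :: l3 :: nil) by reflexivity.
  rewrite Lt in Hn. apply notin_parts in Hn. destruct Hn as [Hg Hn].
  assert (H1 : S N <> l1) by (intros E; apply Hn; simpl; auto).
  assert (H2 : S N <> l2) by (intros E; apply Hn; simpl; auto).
  assert (H3 : S N <> l3) by (intros E; apply Hn; simpl; auto).
  unfold hstep. cbv beta iota.
  rewrite !SG_cons, SG_nil.
  rewrite Gv_same by reflexivity. rewrite (Ft_same _ t) by reflexivity. simpl gfacs; simpl hfac; simpl coef.
  unfold N. rewrite !Gv_new_g; auto.
  2:{ rewrite Lt, tl_mk, flat_map_app. apply nl_hd. }
  2:{ rewrite Lt, tl_mk, flat_map_app. apply nl_hc. }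
  2:{ rewrite Lt, tl_mk, flat_map_app. apply nl_hb. }
  fold N. rewrite (L5 b (S N)) by auto.
  unfold sum4. gen_atoms. ring. Qed.

Lemma step_id t b : SG (Nt t) (step t) b = coef t * Dx V (fun y => Ft V y t b) x.
Proof. destruct t as [c gs h]. unfold step. simpl coef; simpl gfacs; simpl hfac.
  rewrite SG_app. rewrite (gsteps_id c gs h gs nil) by auto. rewrite hstep_id.
  unfold Ft. simpl contr_weight; simpl gfacs; simpl hfac.
  rewrite (Dx_mult V (fun y => contr_weight (mkTerm c gs h) b * prodg V y b gs) (fun y => hval V y b h) x
     (EDx_scal _ _ x (EDx_prodg b gs)) (EDx_hval b h)).
  rewrite Dx_scal. rewrite prodg_nil. gen_atoms. ring. Qed.

Lemma evalG_Gv a N L : (forall t', In t' L -> Nt t' = N \/ Nt t' = S N) ->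
  evalG L V x a = eta a * sum_asg N (fun b => SG N L b) (fun _ => a).
Proof. induction L as [|t' L IH]; intros HL.
  - change (0 = eta a * sum_asg N (fun _ => 0) (fun _ => a)). rewrite sum_asg_0. ring.
  - change (term_val V x a t' + evalG L V x a = eta a * sum_asg N (fun b => Gv N t' b + SG N L b) (fun _ => a)).
    rewrite IH by (intros; apply HL; simpl; auto). rewrite sum_asg_plus. rewrite tv_eq.
    destruct (HL t' (or_introl eq_refl)) as [E|E].
    + rewrite (sum_asg_ext N (Gv N t') (fun b => coef t' * Ft V x t' b)) by (intros; apply Gv_same; auto).
      rewrite sum_asg_scal, E.
      change (fun b : asg => SG N L b) with (SG N L). change (fun b : asg => Ft V x t' b) with (Ft V x t'). ring.
    + rewrite (sum_asg_ext N (Gv N t') (fun b => coef t' * sum4 (fun nu => Ft V x t' (updn b (S N) nu)))) by (intros; apply Gv_new; auto).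
      rewrite sum_asg_scal, E, sum_asg_S.
      change (fun b : asg => SG N L b) with (SG N L). ring. Qed.

Lemma tv_step a t : Dx V (fun y => term_val V y a t) x = evalG (step t) V x a.
Proof. rewrite (evalG_Gv a (Nt t)) by (intros; apply lab_ok_Nt, step_ok; auto).
  change (fun y => term_val V y a t) with (fun y => coef t * eta a * sum_asg (Nt t) (fun b => Ft V y t b) (fun _ => a)).
  rewrite Dx_scal. rewrite (Dx_sum_asg V (Nt t) (fun y b => Ft V y t b)).
  2:{ intros b. apply (Sm_EDx Om); auto. apply (Sm_Ft Om HO V HV). }
  rewrite (sum_asg_ext (Nt t) (fun b => SG (Nt t) (step t) b) (fun b => coef t * Dx V (fun y => Ft V y t b) x)) by (intros; apply step_id).
  rewrite sum_asg_scal. ring. Qed.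

End Sem.

Definition init k : term := mkTerm 2 ((0%nat, (1%nat, 2%nat)) :: nil) (k, (1%nat, 2%nat, 0%nat)).
Fixpoint Gk k : list term := match k with O => nil | S k' => init k' :: flat_map step (Gk k') end.

Lemma cw_init k b : contr_weight (init k) b = eta (b 1%nat) * (eta (b 2%nat) * 1).
Proof. reflexivity. Qed.

Lemma Ft_init V x k b : Ft V x (init k) b =
  eta (b 1%nat) * (eta (b 2%nat) * 1) * (eta (b 2%nat) * partial (b 1%nat) (fun y => V y (b 2%nat)) x * 1) *
  (eta (b 0%nat) * partial (b 1%nat) (partial (b 2%nat) (fun y => DVk V k y (b 0%nat))) x).
Proof. unfold Ft. rewrite cw_init. simpl gfacs; simpl hfac. rewrite prodg_cons, prodg_nil.
  unfold gval, hval; cbv beta iota. rewrite pl0. unfold low. rewrite partial_scal_fun, partial_scal. auto. Qed.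

Lemma tv_init V x a k : term_val V x a (init k) =
  2 * sum4 (fun i => eta i * sum4 (fun mu => partial i (fun y => V y mu) x * partial i (partial mu (fun y => DVk V k y a)) x)).
Proof. rewrite tv_eq. replace (Nt (init k)) with 2%nat by reflexivity. cbn [sum_asg].
  rewrite (sum4_ext _ (fun i => sum4 (fun j => eta j * (eta i * 1) * (eta i * partial j (fun y => V y i) x * 1) *
     (eta a * partial j (partial i (fun y => DVk V k y a)) x)))).
  2:{ intros i. apply sum4_ext. intros j. rewrite Ft_init. reflexivity. }
  simpl coef. unfold sum4. destruct a; simpl eta;
  repeat match goal with |- context [partial ?i ?f ?x] => generalize (partial i f x); intro end; ring. Qed.

Lemma evalG_app A B V x a : evalG (A ++ B) V x a = evalG A V x a + evalG B V x a.
Proof. induction A as [|t A IH]. change (evalG B V x a = 0 + evalG B V x a). ring.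
  change (term_val V x a t + evalG (A ++ B) V x a = (term_val V x a t + evalG A V x a) + evalG B V x a).
  rewrite IH. ring. Qed.

Lemma Sm_evalG Om V L a : open_dom Om -> smooth_vf Om V -> smooth_on Om (fun y => evalG L V y a).
Proof. intros HO HV. induction L as [|t L IH]. exact (Sm_const Om 0).
  apply (Sm_plus Om HO (fun y => term_val V y a t) (fun y => evalG L V y a)); auto. apply Sm_tv; auto. Qed.

Lemma Dx_evalG Om V L a x : open_dom Om -> smooth_vf Om V -> Om x ->
  Dx V (fun y => evalG L V y a) x = evalG (flat_map step L) V x a.
Proof. intros HO HV Hx. induction L as [|t L IH].
  - exact (Dx_const V 0 x).
  - change (Dx V (fun y => term_val V y a t + evalG L V y a) x = evalG (step t ++ flat_map step L) V x a).
    rewrite Dx_plus. rewrite evalG_app, IH. rewrite (tv_step Om HO V HV x Hx). auto.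
    apply (Sm_EDx Om); auto. apply Sm_tv; auto.
    apply (Sm_EDx Om); auto. apply Sm_evalG; auto. Qed.

Lemma Gk_ok k : forall t, In t (Gk k) -> wf_term t /\ (term_order t + 1 <= k)%nat.
Proof. induction k as [|k IH]; intros t Hin; simpl in Hin; [tauto|].
  destruct Hin as [E|Hin].
  - subst t. split.
    + split. reflexivity. intros l Hl Hl0. simpl in Hl.
      destruct Hl as [E|[E|[E|[E|[E|[]]]]]]; subst; try reflexivity; congruence.
    + unfold init. rewrite ord_mk. unfold sumf; simpl. lia.
  - apply in_flat_map in Hin. destruct Hin as [t0 [H0 H1]].
    destruct (IH t0 H0) as [W O]. assert (Hok := step_ok t0 t H1). split.
    + apply (lab_ok_wf t0); auto.
    + destruct Hok as [[_ O']|[_ O']]; lia. Qed.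

Theorem lemma2p8 :
  forall k : nat, exists G : list term,
    (forall t, In t G -> wf_term t /\ (term_order t + 1 <= k)%nat) /\
    forall (Om : pt -> Prop) (V : vfield),
      open_dom Om -> smooth_vf Om V ->
      (forall x, Om x -> forall a, box (fun y => V y a) x = 0) ->
      forall x, Om x -> forall a,
        box (fun y => DVk V k y a) x = evalG G V x a.
Proof.
  intros k. exists (Gk k). split. apply Gk_ok.
  intros Om V HO HV Hbox. induction k as [|k IH]; intros x Hx a.
  - simpl. apply Hbox; auto.
  - change (box (fun y => Dx V (fun y => DVk V k y a) y) x = evalG (init k :: flat_map step (Gk k)) V x a).
    rewrite (S0 Om HO V HV); auto. 2: apply Sm_W; auto.
    change (evalG (init k :: flat_map step (Gk k)) V x a) with (term_val V x a (init k) + evalG (flat_map step (Gk k)) V x a).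
    rewrite tv_init.
    rewrite (Dx_ext_Om Om V _ (fun y => evalG (Gk k) V y a)); auto.
    rewrite (Dx_evalG Om); auto.
    rewrite (sum4_ext (fun mu => box (fun y => V y mu) x * partial mu (fun y => DVk V k y a) x) (fun _ => 0))
      by (intros mu; rewrite Hbox; auto; ring).
    replace (sum4 (fun _ : idx => 0)) with 0 by (unfold sum4; ring).
    ring. Qed.
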